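(* Let $t,k$ be integers with $3\le k\le t$. A sequence $l=(l_1,\dots,l_k)$ with entries in $\{1,\dots,t\}$ maximizes $c(l)$ among all such sequences if and only if: 1. the number $v^*$ of distinct treatments occurring in $l$ maximizes $f(v)$ over $v\in\{2,\dots,t\}$; 2. each treatment occurring in $l$ occurs either $n_-=\lfloor k/v^*\rfloor$ times or $n_+=n_-+1$ times; 3. the number of treatments occurring $n_+$ times in $l$ is $v_+=k-v^*\lfloor k/v^*\rfloor$; 4. the number of treatments occurring $n_-$ times in $l$ is $v_-=v^*-v_+$; 5. for every treatment occurring in $l$, all its occurrences are side by side (consecutive positions, cyclically). Moreover, the maximum value is $f(v^* )$, and $f(v^* )\le k-\sqrt{2k}$, with equality if $\sqrt{2k}$ is an integer.
   Context: For a sequence $l=(l_1,\dots,l_k)$ with entries in $\{1,\dots,t\}$, put $l_0=l_k$; $n_i$ is the number of occurrences of treatment $i$ in $l$ and $m_i$ is the number of $j\in\{1,\dots,k\}$ with $l_{j-1}=l_j=i$ (the sequence is read circularly). Define $c(l)=\frac12\big(k-\frac2k\sum_{i=1}^t n_i^2+\sum_{i=1}^t m_i\big)$ and, for positive integers $v$, $f(v)=-1+k-\frac v2-\big(2-\frac vk\big)\lfloor k/v\rfloor+\frac vk\lfloor k/v\rfloor^2$, where $\lfloor x\rfloor$ is the integer part of $x$. (In the paper, $c(l)$ is the trace of the per-block information bound for total effects $\tau+\lambda$ in the circular block model $\mathbb{E}(Y_{i,j})=\beta_i+\tau_{d(i,j)}+\lambda_{d(i,j-1)}$.) *)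

(* Defs.v *)
From mathcomp Require Import all_boot all_order all_algebra.
Set Implicit Arguments. Unset Strict Implicit. Unset Printing Implicit Defensive.
Import Order.TTheory GRing.Theory Num.Theory.

(* Treatments {1,..,t} are represented by 'I_t = {0,..,t-1};
   positions {1,..,k} by 'I_k = {0,..,k-1}; a sequence is l : 'I_k -> 'I_t. *)

Definition nocc (k t : nat) (l : 'I_k -> 'I_t) (i : 'I_t) : nat :=
  #|[set j : 'I_k | l j == i]|.

(* m_i : number of positions j with l_{j-1} = l_j = i, cyclically
   (ord_pred j is the cyclic predecessor, so l_0 = l_k) *)
Definition madj (k t : nat) (l : 'I_k -> 'I_t) (i : 'I_t) : nat :=
  #|[set j : 'I_k | (l (ord_pred j) == i) && (l j == i)]|.

Local Open Scope ring_scope.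

Definition cval (R : numFieldType) (k t : nat) (l : 'I_k -> 'I_t) : R :=
  2^-1 * (k%:R - 2 / k%:R * (\sum_(i : 'I_t) ((nocc l i) ^ 2)%N%:R)
          + \sum_(i : 'I_t) (madj l i)%:R).

Definition fval (R : numFieldType) (k v : nat) : R :=
  -1 + k%:R - v%:R / 2 - (2 - v%:R / k%:R) * (k %/ v)%N%:R
  + v%:R / k%:R * ((k %/ v) ^ 2)%N%:R.

Definition occurring (k t : nat) (l : 'I_k -> 'I_t) : {set 'I_t} :=
  [set i : 'I_t | (0 < nocc l i)%N].

(* all occurrences of i are side by side, cyclically: there is a start s
   such that l_j = i exactly for j in {s, s+1, ..., s+n_i-1} (mod k) *)
Definition contiguous (k t : nat) (l : 'I_k -> 'I_t) (i : 'I_t) : Prop :=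
  exists s : 'I_k, forall j : 'I_k,
    (l j == i) = (((j + k - s) %% k)%N < nocc l i)%N.

(* Main.v *)
Require Import Defs.
From mathcomp Require Import all_boot all_order all_algebra.
From mathcomp Require Import zify ring lra.
Import Order.TTheory GRing.Theory Num.Theory.
Set Implicit Arguments. Unset Strict Implicit.

Lemma modn_char x k q a : (a < k)%N -> x = (q * k + a)%N -> (x %% k = a)%N.
Proof. by move=> ak ->; rewrite modnMDl modn_small. Qed.

Lemma card_ord_lt n c : (c <= n)%N -> #|[set b : 'I_n | (b < c)%N]| = c.
Proof.
move=> cn.
have -> : [set b : 'I_n | (b < c)%N] = [set widen_ord cn x | x in [set: 'I_c]].
  apply/setP => b; rewrite !inE; apply/idP/imsetP.
    by move=> bc; exists (Ordinal bc); rewrite ?inE //; apply: val_inj.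
  by case=> x _ ->; rewrite /= ltn_ord.
rewrite card_imset ?cardsT ?card_ord // => x y /(congr1 val) /= /val_inj; done.
Qed.

Lemma sq_ineq n q : ((2*q+1)*n <= n^2 + q*(q+1))%N /\
  (((2*q+1)*n == n^2 + q*(q+1))%N = (n == q) || (n == q.+1)).
Proof.
case: (leqP n q) => h.
  have [d ->] : exists d, q = (n + d)%N by exists (q - n)%N; lia.
  split; first nia.
  case: d => [|d]; first by rewrite addn0 eqxx /=; apply/eqP; nia.
  apply/idP/idP => /eqP H; [nia | lia].
have [d ->] : exists d, n = (q + 1 + d)%N by exists (n - q - 1)%N; lia.
split; first nia.
case: d => [|d]; first by rewrite addn0 addn1 addn1 eqxx orbT; apply/eqP; nia.

apply/idP/idP; [move=> /eqP H; nia | case/orP => /eqP H; lia].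
Qed.

Lemma sum_le_eq (I : finType) (P : pred I) (F G : I -> nat) :
  (forall i, P i -> G i <= F i)%N ->
  (\sum_(i | P i) G i <= \sum_(i | P i) F i)%N /\
  ((\sum_(i | P i) F i == \sum_(i | P i) G i) = [forall (i | P i), F i == G i]).
Proof.
move=> H.
have e : (\sum_(i | P i) F i = \sum_(i | P i) G i + \sum_(i | P i) (F i - G i))%N.
  by rewrite -big_split; apply: eq_bigr => i Pi /=; rewrite subnKC // H.
split; first by rewrite e leq_addr.
rewrite e -{2}(addn0 (\sum_(i | P i) G i)) eqn_add2l sum_nat_eq0.
apply/eq_forallb => i; case Pi: (P i) => //=.
by rewrite subn_eq0 eqn_leq (H i Pi) andbT.
Qed.

Section Comb.
Variables (k t : nat) (l : 'I_k -> 'I_t).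
Hypothesis kpos : (0 < k)%N.

Definition sh (s : 'I_k) (a : nat) : 'I_k := Ordinal (ltn_pmod (s + a) kpos).
Definition off (s j : 'I_k) : nat := ((j + k - s) %% k)%N.

Lemma off_lt s j : (off s j < k)%N.
Proof. exact: ltn_pmod. Qed.

Lemma sh_off s j : sh s (off s j) = j.
Proof.
apply: val_inj => /=; rewrite /off.
have hs := ltn_ord s; have hj := ltn_ord j.
case: (ltnP j s) => h.
  rewrite (@modn_char (j + k - s) k 0 (j + k - s)) ?mul0n //; try lia.
  by apply: (@modn_char _ _ 1); lia.
rewrite (@modn_char (j + k - s) k 1 (j - s)); try lia.
by apply: (@modn_char _ _ 0); lia.
Qed.

Lemma off_sh s a : (a < k)%N -> off s (sh s a) = a.
Proof.
move=> ak; rewrite /off /=.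
have hs := ltn_ord s.
case: (ltnP (s + a) k) => h.
  rewrite (@modn_char (s + a) k 0 (s + a)) //; try lia.
  by apply: (@modn_char _ _ 1); lia.
rewrite (@modn_char (s + a) k 1 (s + a - k)); try lia.
by apply: (@modn_char _ _ 0); lia.
Qed.

Lemma sh_inj s a b : (a < k)%N -> (b < k)%N -> sh s a = sh s b -> a = b.
Proof. by move=> ak bk e; rewrite -(@off_sh s a ak) -(@off_sh s b bk) e. Qed.

Lemma sh0 s : sh s 0 = s.
Proof. by apply: val_inj; rewrite /= addn0 modn_small. Qed.

Lemma shk s : sh s k = s.
Proof. by apply: val_inj; rewrite /= modnDr modn_small. Qed.

Lemma pred_sh s a : ord_pred (sh s a.+1) = sh s a.
Proof.
apply: val_inj => /=.
have e := divn_eq (s + a.+1) k.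
have hm := ltn_pmod (s + a.+1) kpos.
set q := ((s + a.+1) %/ k)%N in e; set r := ((s + a.+1) %% k)%N in e hm *.
case: (posnP r) => hr.
  rewrite hr add0n (@modn_char k.-1 k 0 k.-1) //; try lia.
  symmetry; apply: (@modn_char _ _ q.-1); try lia.
  have : (0 < q)%N by move: e; case: q => //=; lia.
  move=> hq; rewrite mulnC -{1}(prednK hq) mulnS in e; lia.
rewrite (@modn_char (r + k).-1 k 1 r.-1); try lia.
symmetry; apply: (@modn_char _ _ q); lia.
Qed.

Definition St (i : 'I_t) := [set j : 'I_k | (l j == i) && (l (ord_pred j) != i)].

Lemma nocc_split i : nocc l i = (madj l i + #|St i|)%N.
Proof.
rewrite /nocc /madj /St -(cardsID [set j : 'I_k | (l (ord_pred j) == i) && (l j == i)]).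
congr addn; apply/eq_card => j; rewrite !inE;
  by case: (l j == i); case: (l (ord_pred j) == i).
Qed.

Lemma occ_ex i : (0 < nocc l i)%N -> exists j, l j == i.
Proof. by move/card_gt0P => [j]; rewrite inE; exists j. Qed.

Lemma St_pos i : (nocc l i < k)%N -> (0 < nocc l i)%N -> (0 < #|St i|)%N.
Proof.
move=> hlt /occ_ex [j0 hj0].
rewrite card_gt0; apply/negP => /eqP h0.
have cl : forall j, l j == i -> l (ord_pred j) == i.
  move=> j hj; apply/negPn/negP => hp.
  have : j \in St i by rewrite inE hj hp.
  by rewrite h0 inE.
have all : forall d, (d <= k)%N -> l (sh j0 (k - d)) == i.
  elim=> [|d IH] hd; first by rewrite subn0 shk.
  have := cl _ (IH (ltnW hd)).
  have -> : (k - d = (k - d.+1).+1)%N by lia.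
  by rewrite pred_sh.
suff : nocc l i = k by lia.
rewrite /nocc -[in RHS](card_ord k) -cardsT; apply: eq_card => j.
rewrite !inE -(sh_off j0 j).
have ho := off_lt j0 j.
by have := all (k - off j0 j)%N (leq_subr _ _); rewrite subKn // ltnW.
Qed.

Lemma St1_contig i : (nocc l i < k)%N -> #|St i| = 1%N -> contiguous l i.
Proof.
move=> hlt /eqP /cards1P [s hs].
set n := nocc l i.
pose P (a : nat) := l (sh s a) == i.
have down : forall a, (0 < a < k)%N -> P a -> P a.-1.
  move=> a /andP [a0 ak] hPa; apply/negPn/negP => hn.
  have : sh s a \in St i.
    by rewrite inE; apply/andP; split => //; rewrite -(prednK a0) pred_sh.
  rewrite hs inE => /eqP; rewrite -{2}(sh0 s) => /sh_inj.
  by move=> /(_ ak kpos); lia.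
have downc : forall a b, (a < k)%N -> P a -> (b <= a)%N -> P b.
  move=> a b ak hPa; elim: a {-2}a (leqnn a) ak hPa => [|d IH] a ha ak hPa hb.
    by have -> : b = a by lia.
  case: (ltnP b a) => hba; last by have -> : b = a by lia.
  apply: (IH a.-1); try lia; first by apply: down => //; lia.
have hcard : n = #|[set a : 'I_k | P a]|.
  rewrite -(card_imset _ (f := fun a : 'I_k => sh s a)); last first.
    by move=> a b /sh_inj => /(_ (ltn_ord a) (ltn_ord b)) /val_inj.
  rewrite /n /nocc; apply: eq_card => j; rewrite inE; apply/idP/imsetP.
    move=> hj; exists (Ordinal (off_lt s j)); rewrite ?inE /P /=;
      by rewrite sh_off.
  by case=> a; rewrite inE => ha ->.
have charP : forall a : 'I_k, P a = (a < n)%N.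
  move=> a; apply/idP/idP => h.
    have : [set b : 'I_k | (b < a.+1)%N] \subset [set a : 'I_k | P a].
      apply/subsetP => b; rewrite !inE => hb.
      by apply: (downc a b (ltn_ord a) h); rewrite -ltnS.
    move/subset_leq_card.
    rewrite card_ord_lt; last exact: ltn_ord.
    by rewrite -hcard.
  apply/negPn/negP => hn.
  have : [set a : 'I_k | P a] \subset [set b : 'I_k | (b < a)%N].
    apply/subsetP => b; rewrite !inE => hb.
    rewrite ltnNge; apply/negP => hab; move/negP: hn; apply; exact: (downc b a (ltn_ord b) hb hab).
  move/subset_leq_card; rewrite card_ord_lt; last exact: ltnW.
  rewrite -hcard => hh.
  have : (n < n)%N by apply: leq_ltn_trans hh h.
  by rewrite ltnn.
exists s => j.
by rewrite -[in LHS](sh_off s j) -(charP (Ordinal (off_lt s j))).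
Qed.

Lemma contig_St1 i : (0 < nocc l i)%N -> (nocc l i < k)%N -> contiguous l i -> #|St i| = 1%N.
Proof.
move=> h0 hlt [s hs].
have hs' : forall j, (l j == i) = (off s j < nocc l i)%N := hs.
suff -> : St i = [set s] by rewrite cards1.
apply/setP => j; rewrite !inE.
rewrite -(sh_off s j); set a := off s j.
have ha : (a < k)%N by apply: off_lt.
have hp : ord_pred s = sh s k.-1.
  by have := pred_sh s k.-1; rewrite (prednK kpos) shk.
have h00 : off s s = 0%N by have := @off_sh s 0 kpos; rewrite sh0.
case: (posnP a) => [->|a0].
  rewrite sh0 eqxx hs' hp hs' h00 h0 off_sh /=; last by rewrite prednK.
  by rewrite -ltnNge -ltnS prednK.
rewrite hs' off_sh // -(prednK a0) pred_sh hs' off_sh; last lia.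
have -> : (a.-1 < nocc l i)%N = (a < nocc l i)%N || (a.-1 < nocc l i)%N by lia.
rewrite prednK //.
have -> : (sh s a == s) = false.
  apply/eqP; rewrite -{2}(sh0 s) => /sh_inj => /(_ ha kpos); lia.
by case: (a < nocc l i)%N.
Qed.

Lemma sum_nocc : (\sum_i nocc l i)%N = k.
Proof.
rewrite -[RHS]card_ord -sum1_card (partition_big l predT) //=.
apply: eq_bigr => i _; rewrite /nocc -sum1_card; apply: eq_bigl => j.
by rewrite inE.
Qed.

Lemma sum_occ (F : 'I_t -> nat) : (forall i, i \notin occurring l -> F i = 0%N) ->
  (\sum_i F i = \sum_(i in occurring l) F i)%N.
Proof.
move=> H; rewrite (bigID (mem (occurring l))) /= [X in (_ + X)%N]big1 ?addn0 //.
Qed.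

Lemma nocc_out i : i \notin occurring l -> nocc l i = 0%N.
Proof. by rewrite inE lt0n negbK => /eqP. Qed.

Lemma St_le i : (#|St i| <= nocc l i)%N.
Proof. by rewrite nocc_split leq_addl. Qed.

Lemma occ_lt i : (2 <= #|occurring l|)%N -> i \in occurring l -> (nocc l i < k)%N.
Proof.
move=> h2 hi.
have : (0 < #|occurring l :\ i|)%N by move: h2; rewrite (cardsD1 i) hi.
move/card_gt0P => [i' hi']; move: hi'; rewrite !inE => /andP [ne hi'].
have H : (nocc l i + nocc l i' <= \sum_j nocc l j)%N.
  by rewrite (bigD1 i) //= (bigD1 i') //= addnA leq_addr.
rewrite sum_nocc in H; lia.
Qed.

Lemma madj_bound : (2 <= #|occurring l|)%N ->
  ((\sum_i madj l i + #|occurring l| <= k)%N /\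
   ((\sum_i madj l i + #|occurring l| == k) =
      [forall (i | i \in occurring l), #|St i| == 1%N])).
Proof.
move=> h2.
have ek : k = (\sum_i madj l i + \sum_(i in occurring l) #|St i|)%N.
  transitivity (\sum_i nocc l i)%N; first by rewrite sum_nocc.
  rewrite -(@sum_occ (fun i => #|St i|)); last first.
    move=> i /nocc_out h; apply/eqP; rewrite -leqn0 -h; exact: St_le.
  by rewrite -big_split; apply: eq_bigr => i _; rewrite nocc_split.
have := @sum_le_eq _ (fun i => i \in occurring l) (fun i => #|St i|) (fun _ => 1%N).
case.
  move=> i hi /=; have hi' : i \in occurring l := hi.
  apply: St_pos; first exact: occ_lt.
  by move: hi'; rewrite inE.
rewrite sum1_card => H1 H2.
split; first lia.
rewrite -H2; by apply/eqP/eqP; lia.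
Qed.

Definition Smin (v : nat) : nat :=
  (v * (k %/ v) ^ 2 + (k - v * (k %/ v)) * (2 * (k %/ v) + 1))%N.

Lemma sq_bound : let v := #|occurring l| in let q := (k %/ v)%N in
  (Smin v <= \sum_i nocc l i ^ 2)%N /\
  ((\sum_i nocc l i ^ 2 == Smin v) =
     [forall (i | i \in occurring l), (nocc l i == q) || (nocc l i == q.+1)]).
Proof.
move=> v q.
have := @sum_le_eq _ (fun i => i \in occurring l) (fun i => nocc l i ^ 2 + q * (q + 1))%N
   (fun i => (2 * q + 1) * nocc l i)%N.
case; first by move=> i _; case: (sq_ineq (nocc l i) q).
rewrite big_split /= sum_nat_const -big_distrr /= -sum_occ; last by move=> i /nocc_out ->.
rewrite -(@sum_occ (fun i => nocc l i ^ 2)); last by move=> i /nocc_out ->.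
rewrite sum_nocc => H1 H2.
have hvq : (v * q <= k)%N by rewrite mulnC leq_divM.
have [r er] : exists r, k = (v * q + r)%N by exists (k - v * q)%N; lia.
have eS : (Smin v + v * q * (q + 1) = (2 * q + 1) * k)%N.
  rewrite /Smin -/q er addKn; ring.
have Ed : forall a, (a + v * q * (q + 1) == Smin v + v * q * (q + 1))%N = (a == Smin v).
  by move=> a; rewrite eqn_add2r.
split.
  rewrite -/v in H1; rewrite -(leq_add2r (v * q * (q + 1))) eS; apply: leq_trans H1 _; rewrite mulnA.
  by [].
rewrite -Ed eS -mulnA.
rewrite (_ : _ == _ = [forall i in occurring l, nocc l i ^ 2 + q * (q + 1) == (2 * q + 1) * nocc l i]); last exact: H2. apply: eq_forallb => i; case: (i \in occurring l) => //=.
by case: (sq_ineq (nocc l i) q) => _ <-; rewrite eq_sym.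
Qed.

End Comb.

Set Implicit Arguments. Unset Strict Implicit.

Lemma card_ord_int n c1 c2 : (c1 <= c2)%N -> (c2 <= n)%N ->
  #|[set j : 'I_n | (c1 <= j < c2)%N]| = (c2 - c1)%N.
Proof.
move=> h12 h2n.
have -> : [set j : 'I_n | (c1 <= j < c2)%N] =
          [set j : 'I_n | (j < c2)%N] :\: [set j : 'I_n | (j < c1)%N].
  by apply/setP => j; rewrite !inE -leqNgt andbC.
rewrite cardsD.
have -> : [set j : 'I_n | (j < c2)%N] :&: [set j : 'I_n | (j < c1)%N] =
          [set j : 'I_n | (j < c1)%N].
  apply/setP => j; rewrite !inE; apply/andP/idP; first by case.
  by move=> h; split => //; lia.
by rewrite !card_ord_lt //; lia.
Qed.

Section Cons.
Variables (k t v : nat).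
Hypotheses (hv2 : (2 <= v)%N) (hvk : (v <= k)%N) (hvt : (v <= t)%N).

Lemma kpos' : (0 < k)%N. Proof. lia. Qed.
Lemma vpos : (0 < v)%N. Proof. lia. Qed.

Lemma lst_lt (j : 'I_k) : (j * v %/ k < t)%N.
Proof.
rewrite ltn_divLR ?kpos' //.
have := ltn_ord j; nia.
Qed.

Definition lst (j : 'I_k) : 'I_t := Ordinal (lst_lt j).

Definition C (b : nat) : nat := ((b * k + v - 1) %/ v)%N.

Lemma C_lt j b : (j < C b)%N = (j * v < b * k)%N.
Proof.
rewrite /C; apply/idP/idP => h.
  move: h; rewrite -[(j < _)%N]/(j.+1 <= _)%N leq_divRL ?vpos //; lia.
rewrite -[(j < _)%N]/(j.+1 <= _)%N leq_divRL ?vpos //; lia.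
Qed.

Lemma lstE (j : 'I_k) (a : 'I_t) : (lst j == a) = (C a <= j < C a.+1)%N.
Proof.
have e : (lst j == a) = (j * v %/ k == a)%N by [].
rewrite e eqn_leq -ltnS ltn_divLR ?kpos' // leq_divRL ?kpos' //.
move: (C_lt j a) (C_lt j a.+1); lia.
Qed.

Lemma Cv : C v = k.
Proof.
rewrite /C.
have -> : (v * k + v - 1 = k * v + (v - 1))%N by lia.
rewrite divnMDl ?vpos // divn_small ?addn0 //; lia.
Qed.

Lemma C_mono b b' : (b <= b')%N -> (C b <= C b')%N.
Proof. by move=> h; rewrite /C leq_div2r //; nia. Qed.

Lemma C_step b : (C b.+1 - C b = k %/ v + (v <= (b * k + v - 1) %% v + k %% v))%N.
Proof.
rewrite /C.
have -> : (b.+1 * k + v - 1 = (b * k + v - 1) + k)%N by lia.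
rewrite divnD ?vpos //; lia.
Qed.

Lemma q_pos : (0 < k %/ v)%N.
Proof. by rewrite divn_gt0 ?vpos. Qed.

Lemma nocc_lst (a : 'I_t) : nocc lst a =
  if (a < v)%N then (C a.+1 - C a)%N else 0%N.
Proof.
rewrite /nocc.
have -> : [set j | lst j == a] = [set j : 'I_k | (C a <= j < C a.+1)%N].
  by apply/setP => j; rewrite !inE lstE.
case: ifP => h.
  rewrite card_ord_int //; first by apply: C_mono.
  by rewrite -Cv; apply: C_mono.
apply/eqP; rewrite cards_eq0; apply/eqP/setP => j; rewrite !inE.
have : (k <= C a)%N by rewrite -Cv; apply: C_mono; lia.
have := ltn_ord j; lia.
Qed.

Lemma occ_lst : occurring lst = [set a : 'I_t | (a < v)%N].
Proof.
apply/setP => a; rewrite !inE nocc_lst; case: ifP => h //.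
rewrite C_step; have := q_pos; lia.
Qed.

Lemma card_occ_lst : #|occurring lst| = v.
Proof. by rewrite occ_lst card_ord_lt. Qed.

Lemma bal_lst (a : 'I_t) : a \in occurring lst ->
  nocc lst a = (k %/ #|occurring lst|)%N \/ nocc lst a = (k %/ #|occurring lst|).+1.
Proof.
rewrite card_occ_lst occ_lst inE nocc_lst => ->.
rewrite C_step; case: (v <= _)%N; [right|left]; lia.
Qed.

Lemma contig_lst (a : 'I_t) : a \in occurring lst -> contiguous lst a.
Proof.
rewrite occ_lst inE => ha.
have h1 : (C a.+1 <= k)%N by rewrite -Cv; apply: C_mono.
have h0 : (C a < C a.+1)%N by have := C_step a; have := q_pos; lia.
have hs : (C a < k)%N by lia.
exists (Ordinal hs) => j.
rewrite lstE nocc_lst ha /=.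
have hj := ltn_ord j.
case: (leqP (C a) j) => hj'.
  by rewrite (@modn_char (j + k - C a) k 1 (j - C a)); lia.
by rewrite (@modn_char (j + k - C a) k 0 (j + k - C a)); lia.
Qed.

End Cons.

Unset Implicit Arguments. Set Strict Implicit.
Local Open Scope ring_scope.

Section Real.
Variable R : rcfType.
Variables (k t : nat).
Hypothesis kpos : (0 < k)%N.

Lemma kR : (0 : R) < k%:R.
Proof. by rewrite ltr0n. Qed.

Lemma cvalE (l : 'I_k -> 'I_t) : cval R l =
  2^-1 * (k%:R - 2 / k%:R * (\sum_i nocc l i ^ 2)%N%:R + (\sum_i madj l i)%N%:R).
Proof. by rewrite /cval !natr_sum. Qed.

Lemma fvalE v : fval R k v =
  2^-1 * (k%:R - 2 / k%:R * (Smin k v)%:R + (k%:R - v%:R)).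
Proof.
rewrite /fval /Smin.
have hvq : (v * (k %/ v) <= k)%N by rewrite mulnC leq_divM.
set q := (k %/ v)%N in hvq *.
rewrite natrD !natrM natrB // natrD !natrM ?natrX ?natrM.
have hk : (k%:R : R) != 0 by rewrite pnatr_eq0 -lt0n.
by field.
Qed.


Lemma kR0 : (k%:R : R) != 0.
Proof. by rewrite pnatr_eq0 -lt0n. Qed.

Lemma occ_pos (l : 'I_k -> 'I_t) : (0 < #|occurring l|)%N.
Proof.
apply/card_gt0P; exists (l (Ordinal kpos)); rewrite inE.
by apply/card_gt0P; exists (Ordinal kpos); rewrite inE.
Qed.

Lemma occ_le (l : 'I_k -> 'I_t) : (#|occurring l| <= t)%N.
Proof. by rewrite -[X in (_ <= X)%N](card_ord t) max_card. Qed.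

Lemma Mm_le (l : 'I_k -> 'I_t) : (\sum_i madj l i <= k)%N.
Proof.
rewrite -[X in (_ <= X)%N](sum_nocc l); apply: leq_sum => i _.
by rewrite nocc_split leq_addr.
Qed.

Lemma cval_le (l : 'I_k -> 'I_t) : (2 <= #|occurring l|)%N ->
  cval R l <= fval R k #|occurring l| /\
  (cval R l = fval R k #|occurring l| <->
    (\sum_i nocc l i ^ 2 = Smin k #|occurring l|)%N /\
    (\sum_i madj l i + #|occurring l| = k)%N).
Proof.
move=> h2.
have [S1 S2] := sq_bound l kpos.
have [M1 M2] := madj_bound kpos h2.
rewrite cvalE fvalE.
set S := (\sum_i nocc l i ^ 2)%N in S1 S2 *.
set Mm := (\sum_i madj l i)%N in M1 M2 *.
set v := #|occurring l| in S1 S2 M1 M2 *.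
have hS : (Smin k v)%:R <= S%:R :> R by rewrite ler_nat.
have hM : Mm%:R + v%:R <= k%:R :> R by rewrite -natrD ler_nat.
have hk := kR.
have hki : 0 < (k%:R : R)^-1 by rewrite invr_gt0.
have hp : 0 <= (k%:R : R)^-1 * (S%:R - (Smin k v)%:R) by rewrite mulr_ge0 // ?subr_ge0 // ltW.
split; first by lra.
split; last first.
  by move=> [-> <-]; rewrite natrD; ring.
move=> e.
have e1 : (k%:R : R)^-1 * (S%:R - (Smin k v)%:R) = 0 by lra.
have e2 : Mm%:R + v%:R = k%:R :> R by lra.
split.
  apply/eqP; rewrite -(eqr_nat R) -subr_eq0; apply/eqP.
  by move: e1 => /eqP; rewrite mulf_eq0 invr_eq0 (negbTE kR0) /= => /eqP.
by apply/eqP; rewrite -(eqr_nat R) natrD e2.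
Qed.


Lemma cval_v1 (l : 'I_k -> 'I_t) : #|occurring l| = 1%N -> cval R l <= 0.
Proof.
move=> h1.
have [S1 _] := sq_bound l kpos.
move: S1; rewrite h1 /Smin divn1 !mul1n subnn mul0n addn0 => S1.
have hM := Mm_le l.
rewrite cvalE.
set S := (\sum_i nocc l i ^ 2)%N in S1 *.
set Mm := (\sum_i madj l i)%N in hM *.
have hS : (k%:R : R)^-1 * (k ^ 2)%N%:R <= (k%:R)^-1 * S%:R.
  by rewrite ler_wpM2l ?invr_ge0 ?ler0n // ler_nat.
have ek : (k%:R : R)^-1 * (k ^ 2)%N%:R = k%:R.
  by rewrite natrX expr2 mulrA mulVf ?mul1r // kR0.
have hMR : Mm%:R <= k%:R :> R by rewrite ler_nat.
rewrite ek in hS.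
lra.
Qed.

Lemma f2_pos : (3 <= k)%N -> 0 < fval R k 2.
Proof.
move=> hk3.
have hn : (Smin k 2 < k * (k - 1))%N.
  rewrite /Smin.
  have e := divn_eq k 2.
  have hr : (k %% 2 < 2)%N by rewrite ltn_mod.
  set q := (k %/ 2)%N in e *; set r := (k %% 2)%N in e hr.
  have -> : (k - 2 * q = r)%N by lia.
  clearbody q r.
  have [er|er] : r = 0%N \/ r = 1%N by lia.
    have hq : (2 <= q)%N by lia.
    rewrite e er; nia.
  have hq : (1 <= q)%N by lia.
  rewrite e er; nia.
rewrite fvalE.
have hk := kR.
have : (Smin k 2)%:R / k%:R < (k%:R - 1 : R).
  have -> : (k%:R - 1 : R) = (k - 1)%N%:R by rewrite natrB //; lia.
  by rewrite ltr_pdivrMr // -natrM ltr_nat mulnC.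
move=> h.
have e : 2 / k%:R * (Smin k 2)%:R = 2 * ((Smin k 2)%:R / k%:R) :> R.
  by ring.
rewrite e.
have : (3 : R) <= k%:R by rewrite (ler_nat R 3 k).
lra.
Qed.


Lemma f_gt_k w : (k < w)%N -> fval R k w < fval R k k.
Proof.
move=> hw.
have e1 : Smin k w = k by rewrite /Smin divn_small //; lia.
have e2 : Smin k k = k by rewrite /Smin divnn kpos; lia.
rewrite !fvalE e1 e2.
have : k%:R < w%:R :> R by rewrite ltr_nat.
have hk := kR.
have -> : 2 / k%:R * k%:R = 2 :> R by rewrite mulfVK ?kR0.
lra.
Qed.

Lemma f_le_sqrt v : (0 < v)%N -> fval R k v <= k%:R - Num.sqrt (2 * k)%N%:R.
Proof.
move=> hv.
have hn : (k * k <= v * Smin k v)%N.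
  rewrite /Smin.
  have e := divn_eq k v.
  have hr : (k %% v < v)%N by rewrite ltn_mod.
  set q := (k %/ v)%N in e *; set r := (k %% v)%N in e hr.
  have -> : (k - v * q = r)%N by lia.
  clearbody q r.
  have : (r * r <= v * r)%N by rewrite leq_mul2r ltnW ?orbT.
  rewrite e; nia.
rewrite fvalE.
set s := Smin k v in hn *.
have hk := kR.
have ha : (0 : R) < v%:R by rewrite ltr0n.
have hns : (k%:R : R) * k%:R <= s%:R * v%:R by rewrite -!natrM ler_nat mulnC.
have h1 : (k%:R : R) / v%:R <= s%:R / k%:R.
  by rewrite ler_pdivlMr // mulrAC ler_pdivrMr.
have h2 : (v%:R / 2 + k%:R / v%:R : R) ^+ 2 = (v%:R / 2 - k%:R / v%:R) ^+ 2 + 2 * k%:R.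
  by field; rewrite lt0r_neq0.
have h3 : Num.sqrt (2 * k)%N%:R <= (v%:R / 2 + k%:R / v%:R : R).
  have hx : (0 : R) <= v%:R / 2 + k%:R / v%:R.
    by rewrite addr_ge0 // divr_ge0 // ltW.
  rewrite -(ger0_norm hx) -sqrtr_sqr ler_sqrt ?sqr_ge0 // h2 natrM.
  by rewrite lerDr sqr_ge0.
have e : 2 / k%:R * s%:R = 2 * (s%:R / k%:R) :> R by ring.
rewrite e.
lra.
Qed.

Lemma f_sq n : (n ^ 2 = 2 * k)%N ->
  fval R k n = k%:R - n%:R /\ Num.sqrt (2 * k)%N%:R = n%:R :> R.
Proof.
move=> e.
split; last by rewrite -e natrX sqrtr_sqr ger0_norm.
have [m [em|em]] : exists m, n = (2 * m)%N \/ n = (2 * m + 1)%N.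
  exists (n %/ 2)%N; have := divn_eq n 2; have : (n %% 2 < 2)%N by rewrite ltn_mod.
  lia.
  2: by exfalso; rewrite em in e; nia.
have ek : k = (2 * m * m)%N by rewrite em in e; nia.
have hm : (0 < m)%N by have := kpos; rewrite ek; nia.
have hq : (k %/ n = m)%N by rewrite ek em mulnC mulnK // muln_gt0 hm.
rewrite fvalE /Smin hq.
have -> : (k - n * m = 0)%N by rewrite ek em; lia.
rewrite mul0n addn0 ek em !natrM ?natrX ?natrM.
have hm0 : (m%:R : R) != 0 by rewrite pnatr_eq0 -lt0n.
field.
by [].
Qed.

Lemma exists_max (g : nat -> R) a b : (a <= b)%N ->
  exists w, (a <= w <= b)%N /\ forall w', (a <= w' <= b)%N -> g w' <= g w.
Proof.
move=> hab; have [d ->] : exists d, b = (a + d)%N by exists (b - a)%N; lia.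
elim: d {hab} => [|d [w [hw Hw]]].
  exists a; split; first by rewrite addn0 leqnn.
  by move=> w'; rewrite addn0 => hw'; have -> : w' = a by lia.
case: (lerP (g (a + d.+1)%N) (g w)) => h.
  exists w; split; first lia.
  move=> w' hw'; case: (ltnP w' (a + d.+1)) => h'.
    by apply: Hw; lia.
  by have -> : w' = (a + d.+1)%N by lia.
exists (a + d.+1)%N; split; first lia.
move=> w' hw'; case: (ltnP w' (a + d.+1)) => h'.
  by apply: le_trans (Hw _ _) (ltW h); lia.
by have -> : w' = (a + d.+1)%N by lia.
Qed.


Lemma cval_eq (l : 'I_k -> 'I_t) : (2 <= #|occurring l|)%N ->
  (forall i, i \in occurring l -> nocc l i = (k %/ #|occurring l|)%N \/
                                   nocc l i = (k %/ #|occurring l|).+1) ->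
  (forall i, i \in occurring l -> contiguous l i) ->
  cval R l = fval R k #|occurring l|.
Proof.
move=> h2 hb hc.
have [_ [_ H]] := cval_le l h2; apply: H.
have [_ S2] := sq_bound l kpos.
have [_ M2] := madj_bound kpos h2.
split; apply/eqP.
  rewrite S2; apply/forall_inP => i hi.
  by case: (hb i hi) => ->; rewrite eqxx ?orbT.
rewrite M2; apply/forall_inP => i hi; apply/eqP.
apply: contig_St1 => //.
- by move: hi; rewrite inE.
- exact: (occ_lt kpos h2 hi).
- exact: hc.
Qed.

Lemma cval_ub (l : 'I_k -> 'I_t) : (3 <= k)%N -> (2 <= t)%N ->
  exists w, (2 <= w <= t)%N /\ cval R l <= fval R k w.
Proof.
move=> hk3 ht.
have h1 := occ_pos l.
have h2 := occ_le l.
case: (ltnP 1 #|occurring l|) => hv.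
  exists #|occurring l|; split; first by rewrite hv h2.
  by case: (cval_le l hv).
exists 2%N; split; first by rewrite leqnn ht.
have e : #|occurring l| = 1%N by lia.
exact: le_trans (cval_v1 l e) (ltW (f2_pos hk3)).
Qed.

End Real.

Local Open Scope ring_scope.

Lemma sum_bool_card (t : nat) (A : {set 'I_t}) (P : pred 'I_t) :
  (\sum_(i in A) (P i : nat))%N = #|[set i in A | P i]|.
Proof.
rewrite -sum1_card [RHS]big_mkcond [LHS]big_mkcond /=; apply: eq_bigr => i _.
by rewrite !inE; case: (i \in A); case: (P i).
Qed.

Lemma sum_occ_eq (k t : nat) (l : 'I_k -> 'I_t) : (\sum_(i in occurring l) nocc l i)%N = k.
Proof. by rewrite -sum_occ ?sum_nocc // => i /nocc_out. Qed.

Theorem proposition9 (R : rcfType) (t k : nat) (hk : (3 <= k)%N) (hkt : (k <= t)%N) :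
  (forall l : 'I_k -> 'I_t,
     (forall l' : 'I_k -> 'I_t, cval R l' <= cval R l) <->
     (let vs := #|occurring l| in
      let nm := (k %/ vs)%N in
      let vp := (k - vs * nm)%N in
      [/\ (2 <= vs <= t)%N /\
            (forall w : nat, (2 <= w <= t)%N -> fval R k w <= fval R k vs),
          (forall i, i \in occurring l -> nocc l i = nm \/ nocc l i = nm.+1),
          #|[set i in occurring l | nocc l i == nm.+1]| = vp,
          #|[set i in occurring l | nocc l i == nm]| = (vs - vp)%N &
          (forall i, i \in occurring l -> contiguous l i)]))
  /\
  (forall vs : nat, (2 <= vs <= t)%N ->
     (forall w : nat, (2 <= w <= t)%N -> fval R k w <= fval R k vs) ->
     [/\ (forall l : 'I_k -> 'I_t, cval R l <= fval R k vs),
         (exists l : 'I_k -> 'I_t, cval R l = fval R k vs),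
         fval R k vs <= k%:R - Num.sqrt (2 * k)%N%:R &
         ((exists n : nat, (n ^ 2 = 2 * k)%N) ->
            fval R k vs = k%:R - Num.sqrt (2 * k)%N%:R)]).
Proof.
have kpos : (0 < k)%N by lia.
have ht : (2 <= t)%N by lia.
have UB : forall vs, (2 <= vs <= t)%N ->
    (forall w, (2 <= w <= t)%N -> fval R k w <= fval R k vs) ->
    forall l : 'I_k -> 'I_t, cval R l <= fval R k vs.
  move=> vs hvs Hvs l.
  have [w [hw Hw]] := cval_ub R _ _ kpos l hk ht.
  exact: le_trans Hw (Hvs w hw).
have LEK : forall vs, (2 <= vs <= t)%N ->
    (forall w, (2 <= w <= t)%N -> fval R k w <= fval R k vs) -> (vs <= k)%N.
  move=> vs hvs Hvs; rewrite leqNgt; apply/negP => hgt.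
  have := f_gt_k R _ kpos _ hgt.
  have := Hvs k; rewrite hkt (leq_trans _ hk) // => /(_ isT) h1 h2.
  by have := lt_le_trans h2 h1; rewrite ltxx.
have EX : forall vs, (2 <= vs <= t)%N -> (vs <= k)%N ->
    exists l : 'I_k -> 'I_t, cval R l = fval R k vs.
  move=> vs /andP [h2 h3] h4.
  exists (lst h2 h4 h3).
  rewrite -{2}(card_occ_lst h2 h4 h3).
  apply: cval_eq => //; first by rewrite card_occ_lst.
    by move=> i; apply: bal_lst.
  by move=> i; apply: contig_lst.
have [vs0 [hvs0 Hvs0]] := exists_max R _ kpos (fval R k) _ _ ht.
split.
  move=> l; cbv zeta; split.
  - move=> Hmax.
    have [ls hls] := EX vs0 hvs0 (LEK vs0 hvs0 Hvs0).
    have hge : fval R k vs0 <= cval R l by rewrite -hls; apply: Hmax.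
    have h1 := occ_pos _ _ kpos l.
    have hle := occ_le _ _ l.
    have h2 : (2 <= #|occurring l|)%N.
      rewrite ltnNge; apply/negP => h.
      have e : #|occurring l| = 1%N by lia.
      have := cval_v1 R _ _ kpos l e.
      have := f2_pos R _ kpos hk.
      have := Hvs0 2%N; rewrite leqnn ht => /(_ isT) => a b c.
      have := lt_le_trans b a; have := le_trans hge c.
      move=> x y; by have := lt_le_trans y x; rewrite ltxx.
    set v := #|occurring l| in h1 hle h2 *.
    have [c1 c2] := cval_le R _ _ kpos l h2.
    have hv : (2 <= v <= t)%N by rewrite h2 hle.
    have fv := Hvs0 v hv.
    have ec : cval R l = fval R k v.
      by apply/eqP; rewrite eq_le c1 (le_trans fv hge).
    have [ES EM] := (c2.1 ec).
    have [_ S2] := sq_bound l kpos.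
    have [_ M2] := madj_bound kpos h2.
    have hbal : forall i, i \in occurring l ->
        nocc l i = (k %/ v)%N \/ nocc l i = (k %/ v).+1.
      move: S2; rewrite -/v ES eqxx => /esym /forall_inP H i hi.
      by case/orP: (H i hi) => /eqP ->; [left | right].
    have hcon : forall i, i \in occurring l -> contiguous l i.
      move: M2; rewrite -/v EM eqxx => /esym /forall_inP H i hi.
      apply: St1_contig => //; first exact: (occ_lt kpos h2 hi).
      by apply/eqP; apply: H.
    have hsum : (\sum_(i in occurring l) nocc l i =
        v * (k %/ v) + #|[set i in occurring l | nocc l i == (k %/ v).+1]|)%N.
      rewrite -sum_bool_card; set q := (k %/ v)%N in hbal *.
      rewrite -[v]sum1_card big_distrl /= -big_split /=.
      apply: eq_bigr => i hi; rewrite mul1n.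
      case: (hbal i hi) => ->; rewrite ?eqxx ?addn1 //.
      by rewrite (ltn_eqF (ltnSn q)) addn0.
    have hsum2 : (#|[set i in occurring l | nocc l i == (k %/ v)]| +
        #|[set i in occurring l | nocc l i == (k %/ v).+1]| = v)%N.
      rewrite -!sum_bool_card -big_split /= -[RHS]sum1_card.
      apply: eq_bigr => i hi.
      by case: (hbal i hi) => ->; rewrite eqxx ?(ltn_eqF (ltnSn _)) ?(gtn_eqF (ltnSn _)).
    rewrite sum_occ_eq in hsum.
    split => //.
    + split => // w hw; rewrite -ec; exact: le_trans (Hvs0 w hw) hge.
    + lia.
    + lia.
  - case=> [[hv Hv] hbal _ _ hcon] l'.
    have h2 : (2 <= #|occurring l|)%N by case/andP: hv.
    rewrite (cval_eq R _ _ kpos l h2 hbal hcon).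
    exact: UB.
move=> vs hvs Hvs.
have hvk := LEK vs hvs Hvs.
split.
- exact: UB.
- exact: EX.
- by apply: f_le_sqrt => //; case/andP: hvs => h _; lia.
- case=> n hn.
  have [e1 e2] := f_sq R _ kpos _ hn.
  have hn2 : (2 <= n <= t)%N.
    apply/andP; split; first nia.
    apply: leq_trans hkt; nia.
  have := Hvs n hn2; rewrite e1 -e2 => h.
  apply/eqP; rewrite eq_le h andbT.
  by apply: f_le_sqrt => //; case/andP: hvs => hh _; lia.
Qed.
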